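(* Let $t>0$ be fixed and $x_1,x_2>0$ with $x_1\ne x_2$. Then the characteristic triangles $\Delta(x_1,t)$ and $\Delta(x_2,t)$ do not intersect in the open quadrant $(0,\infty)^2$.
   Context: Standing assumptions: $u_0,u_b:[0,\infty)\to\mathbb{R}$ bounded measurable with $u_b>0$; $\rho_0,\rho_b:[0,\infty)\to(0,\infty)$ positive locally bounded measurable. For $x,t,y,\tau\ge0$: $F(y,x,t)=\int_0^y[tu_0(\eta)+\eta-x]\rho_0(\eta)\,d\eta$, $G(\tau,x,t)=\int_0^\tau[x-u_b(\eta)(t-\eta)]\rho_b(\eta)u_b(\eta)\,d\eta$, $F(x,t)=\min_{y\ge0}F(y,x,t)$, $G(x,t)=\min_{\tau\ge0}G(\tau,x,t)$ (minima attained); $y_*\le y^*$ smallest/largest minimizers of $F(\cdot,x,t)$, $\tau_*\le\tau^*$ those of $G(\cdot,x,t)$. Characteristic triangle $\Delta(x,t)$ ($x\ge0,t>0$): (1) if $x>0$, $F(x,t)<G(x,t)$: convex hull of $(x,t),(y_*(x,t),0),(y^*(x,t),0)$; (2) if $F(x,t)>G(x,t)$: convex hull of $(x,t),(0,\tau_*(x,t)),(0,\tau^*(x,t))$; (3) if $F(x,t)=G(x,t)$: convex hull of $(x,t),(y^*(x,t),0),(0,\tau^*(x,t)),(0,0)$; (4) if $x=0$, $F(0,t)<G(0,t)$: convex hull of $(0,t),(0,0),(y^*(0,t),0)$. *)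

(* Defs.v *)
From HB Require Import structures.
From mathcomp Require Import all_boot all_order all_algebra.
From mathcomp Require Import all_classical all_reals all_analysis.
Set Implicit Arguments.
Unset Strict Implicit.
Unset Printing Implicit Defensive.
Import Order.TTheory GRing.Theory Num.Theory.
Import numFieldNormedType.Exports.
Local Open Scope classical_set_scope.
Local Open Scope ring_scope.

Section Defs.
Variable R : realType.
Variables (u0 ub rho0 rhob : R -> R).

Definition Fyxt (y x t : R) : R :=
  \int[@lebesgue_measure R]_(eta in `[0, y]) ((t * u0 eta + eta - x) * rho0 eta).

Definition Gtxt (tau x t : R) : R :=
  \int[@lebesgue_measure R]_(eta in `[0, tau]) ((x - ub eta * (t - eta)) * rhob eta * ub eta).

Definition Fmin (x t : R) : R := inf [set Fyxt y x t | y in `[0, +oo[].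
Definition Gmin (x t : R) : R := inf [set Gtxt tau x t | tau in `[0, +oo[].

Definition argminF (x t : R) : set R := [set y | 0 <= y /\ Fyxt y x t = Fmin x t].
Definition argminG (x t : R) : set R := [set tau | 0 <= tau /\ Gtxt tau x t = Gmin x t].

Definition y_low (x t : R) : R := inf (argminF x t).
Definition y_up (x t : R) : R := sup (argminF x t).
Definition tau_low (x t : R) : R := inf (argminG x t).
Definition tau_up (x t : R) : R := sup (argminG x t).

Definition conv3 (a b c : R * R) : set (R * R) :=
  [set p | exists l1 l2 l3 : R, [/\ 0 <= l1, 0 <= l2, 0 <= l3, l1 + l2 + l3 = 1 &
     p = (l1 * a.1 + l2 * b.1 + l3 * c.1, l1 * a.2 + l2 * b.2 + l3 * c.2)]].

Definition conv4 (a b c e : R * R) : set (R * R) :=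
  [set p | exists l1 l2 l3 l4 : R,
     [/\ 0 <= l1, 0 <= l2, 0 <= l3, 0 <= l4 & l1 + l2 + l3 + l4 = 1] /\
     p = (l1 * a.1 + l2 * b.1 + l3 * c.1 + l4 * e.1,
          l1 * a.2 + l2 * b.2 + l3 * c.2 + l4 * e.2)].

Definition char_triangle (x t : R) : set (R * R) :=
  if (0 < x) && (Fmin x t < Gmin x t) then
    conv3 (x, t) (y_low x t, 0) (y_up x t, 0)
  else if Gmin x t < Fmin x t then
    conv3 (x, t) (0, tau_low x t) (0, tau_up x t)
  else if Fmin x t == Gmin x t then
    conv4 (x, t) (y_up x t, 0) (0, tau_up x t) (0, 0)
  else (* x = 0 and F(0,t) < G(0,t) *)
    conv3 (0, t) (0, 0) (y_up 0 t, 0).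

End Defs.

Definition has_extreme_minimizers (R : realType) (f : R -> R) : Prop :=
  exists ylo yhi : R, [/\ 0 <= ylo, 0 <= yhi,
    (forall y, 0 <= y -> f ylo <= f y), f yhi = f ylo &
    (forall y, 0 <= y -> f y = f ylo -> ylo <= y /\ y <= yhi)].

Definition bounded_on_nonneg (R : realType) (f : R -> R) : Prop :=
  exists C : R, forall eta, 0 <= eta -> `|f eta| <= C.

Definition locally_bounded_on_nonneg (R : realType) (f : R -> R) : Prop :=
  forall M : R, exists C : R, forall eta, 0 <= eta -> eta <= M -> `|f eta| <= C.

(* Main.v *)
Require Import Defs.
From HB Require Import structures.
From mathcomp Require Import all_boot all_order all_algebra.
From mathcomp Require Import all_classical all_reals all_analysis.
From mathcomp Require Import measurable_realfun.
From mathcomp Require Import ring lra.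
Import Order.TTheory GRing.Theory Num.Theory.
Import numFieldNormedType.Exports.
Local Open Scope classical_set_scope.
Local Open Scope ring_scope.

Section Gen.
Context {R : realType}.
Notation mu := (@lebesgue_measure R).

Definition lb (f : R -> R) := forall M : R, exists C : R, forall eta, 0 <= eta -> eta <= M -> `|f eta| <= C.

Lemma lbC c : lb (fun _ => c).
Proof. by move=> M; exists `|c|. Qed.
Lemma lbid : lb (fun x => x).
Proof. move=> M; exists `|M| => e h0 h1; rewrite ger0_norm //; exact: le_trans (ler_norm _). Qed.
Lemma lbB (f : R -> R) : bounded_on_nonneg f -> lb f.
Proof. by move=> [C hC] M; exists C => e h0 _; apply: hC. Qed.
Lemma lbL (f : R -> R) : locally_bounded_on_nonneg f -> lb f.
Proof. by []. Qed.
Lemma lbD f g : lb f -> lb g -> lb (fun x => f x + g x).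
Proof.
move=> hf hg M; have [C1 h1] := hf M; have [C2 h2] := hg M; exists (C1 + C2) => e a b.
by rewrite (le_trans (ler_normD _ _)) // lerD // ?h1 ?h2.
Qed.
Lemma lbN f : lb f -> lb (fun x => - f x).
Proof. by move=> hf M; have [C h] := hf M; exists C => e a b; rewrite normrN h. Qed.
Lemma lbM f g : lb f -> lb g -> lb (fun x => f x * g x).
Proof.
move=> hf hg M; have [C1 h1] := hf M; have [C2 h2] := hg M; exists (C1 * C2) => e a b.
by rewrite normrM ler_pM // ?h1 ?h2.
Qed.

Lemma integ (f : R -> R) (y : R) : measurable_fun (`[0%R, +oo[ : set R) f -> lb f ->
  mu.-integrable `[0, y] (EFin \o f).
Proof.
move=> mf hb; apply: measurable_bounded_integrable => //.
- have := @lebesgue_measure_itv R `[0, y]; move=> /= ->; case: ifP => _; by rewrite ltry.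
- apply: (measurable_funS _ _ mf) => //; apply: subset_itvl; by rewrite bnd_simp.
- have [C hC] := hb y; exists C; split; first by rewrite num_real.
  move=> M hM x; rewrite /= in_itv /= => /andP[h0 h1].
  by rewrite (le_trans (hC _ h0 h1)) // ltW.
Qed.

Lemma Rint_gt0 (f : R -> R) (a b : R) : a < b -> mu.-integrable `]a, b] (EFin \o f) ->
  (forall x, a < x -> x <= b -> 0 < f x) -> 0 < \int[mu]_(x in `]a, b]) f x.
Proof.
move=> ab hi hpos.
have hge : 0 <= \int[mu]_(x in `]a, b]) f x.
  apply: Rintegral_ge0 => x; rewrite /= in_itv /= => /andP[h1 h2]; exact/ltW/hpos.
rewrite lt_neqAle hge andbT; apply/eqP => h0.
have hfin : (\int[mu]_(x in `]a, b]) (f x)%:E \is a fin_num)%E by apply: integrable_fin_num hi.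
have hI : (\int[mu]_(x in `]a, b]) (f x)%:E = 0)%E.
  by rewrite -(fineK hfin); rewrite /Rintegral in h0; rewrite -h0.
have habs : (\int[mu]_(x in `]a, b]) `|(f x)%:E| = 0)%E.
  rewrite -hI; apply: eq_integral => x; rewrite inE /= in_itv /= => /andP[h1 h2].
  by rewrite /= ger0_norm //; exact/ltW/hpos.
have mf := measurable_int _ hi.
have mD : measurable (`]a, b] : set R) by [].
have := (ae_eq_integral_abs mu mD mf).1 habs.
case=> N [mN N0 sN].
have : (mu `]a, b] <= mu N)%E.
  apply: le_measure; rewrite ?inE //.
  move=> x hx; apply: sN => /= hx2; move: (hx).
  rewrite /= in_itv /= => /andP[h1 h2].
  have := hx2 hx; rewrite /cst /= => -[] /eqP; rewrite (gt_eqF (hpos _ h1 h2)) //.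
rewrite N0.
have := @lebesgue_measure_itv R `]a, b]; move=> /= ->.
by rewrite ifT ?lee_fin ?subr_le0 ?leNgt ?ab // bnd_simp.
Qed.

Lemma prim_lt (f : R -> R) (a b : R) : measurable_fun (`[0%R, +oo[ : set R) f -> lb f ->
  (forall x, a < x -> x <= b -> 0 < f x) -> 0 <= a -> a < b ->
  \int[mu]_(x in `[0, a]) f x < \int[mu]_(x in `[0, b]) f x.
Proof.
move=> mf hb hp a0 ab; rewrite -subr_gt0.
have := @Rintegral_itvB R f (BLeft 0) (BRight b) a (integ f b mf hb).
rewrite !bnd_simp => ->; [|by []|exact: ltW].
apply: Rint_gt0 => //.
apply: integrableS (integ f b mf hb) => //; apply: subset_itvr; by rewrite bnd_simp.
Qed.

Lemma prim_ge0 (f : R -> R) (a : R) : (forall x, 0 <= x -> 0 < f x) ->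
  0 <= \int[mu]_(x in `[0, a]) f x.
Proof.
move=> hp; apply: Rintegral_ge0 => x; rewrite /= in_itv /= => /andP[h1 _]; exact/ltW/hp.
Qed.

End Gen.

Section Conv.
Context {R : realType}.
Definition phi (al be ga : R) (q : R * R) := al * q.1 + be * q.2 + ga.

Lemma conv3_ge al be ga (A B C p : R * R) : conv3 A B C p ->
  0 <= phi al be ga A -> 0 <= phi al be ga B -> 0 <= phi al be ga C -> 0 <= phi al be ga p.
Proof.
case=> l1 [l2 [l3 [h1 h2 h3 hs ->]]]; rewrite /phi /= => hA hB hC.
have hg : ga = (l1 + l2 + l3) * ga by rewrite hs mul1r.
rewrite hg.
have -> : al * (l1 * A.1 + l2 * B.1 + l3 * C.1) + be * (l1 * A.2 + l2 * B.2 + l3 * C.2) +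
  (l1 + l2 + l3) * ga = l1 * (al * A.1 + be * A.2 + ga) + l2 * (al * B.1 + be * B.2 + ga)
   + l3 * (al * C.1 + be * C.2 + ga) by ring.
by rewrite !addr_ge0 // mulr_ge0.
Qed.

Lemma conv4_ge al be ga (A B C E p : R * R) : conv4 A B C E p ->
  0 <= phi al be ga A -> 0 <= phi al be ga B -> 0 <= phi al be ga C -> 0 <= phi al be ga E ->
  0 <= phi al be ga p.
Proof.
case=> l1 [l2 [l3 [l4 [[h1 h2 h3 h4 hs] ->]]]]; rewrite /phi /= => hA hB hC hE.
have hg : ga = (l1 + l2 + l3 + l4) * ga by rewrite hs mul1r.
rewrite hg.
have -> : al * (l1 * A.1 + l2 * B.1 + l3 * C.1 + l4 * E.1) + be * (l1 * A.2 + l2 * B.2 + l3 * C.2 + l4 * E.2) +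
  (l1 + l2 + l3 + l4) * ga = l1 * (al * A.1 + be * A.2 + ga) + l2 * (al * B.1 + be * B.2 + ga)
   + l3 * (al * C.1 + be * C.2 + ga) + l4 * (al * E.1 + be * E.2 + ga) by ring.
by rewrite !addr_ge0 // mulr_ge0.
Qed.

Lemma conv3_base al be ga (A B C p : R * R) : conv3 A B C p ->
  phi al be ga A < 0 -> phi al be ga B <= 0 -> phi al be ga C <= 0 -> 0 <= phi al be ga p ->
  exists l2 l3, p.1 = l2 * B.1 + l3 * C.1 /\ p.2 = l2 * B.2 + l3 * C.2.
Proof.
move=> hc; case: (hc) => l1 [l2 [l3 [h1 h2 h3 hs hp]]] hA hB hC hP.
suff l10 : l1 = 0.
  by exists l2, l3; rewrite hp /= l10 !mul0r !add0r.
move: hP; rewrite hp /phi /=.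
have hg : ga = (l1 + l2 + l3) * ga by rewrite hs mul1r.
rewrite hg.
have -> : al * (l1 * A.1 + l2 * B.1 + l3 * C.1) + be * (l1 * A.2 + l2 * B.2 + l3 * C.2) +
  (l1 + l2 + l3) * ga = l1 * (al * A.1 + be * A.2 + ga) + l2 * (al * B.1 + be * B.2 + ga)
   + l3 * (al * C.1 + be * C.2 + ga) by ring.
move: hA hB hC; rewrite /phi.
move: (al * A.1 + be * A.2 + ga) (al * B.1 + be * B.2 + ga) (al * C.1 + be * C.2 + ga) => a b c ha hb hc' h.
nra.
Qed.

Lemma conv4_base al be ga (A B C E p : R * R) : conv4 A B C E p ->
  phi al be ga A < 0 -> phi al be ga B <= 0 -> phi al be ga C <= 0 -> phi al be ga E <= 0 ->
  0 <= phi al be ga p ->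
  exists l2 l3 l4, p.1 = l2 * B.1 + l3 * C.1 + l4 * E.1 /\ p.2 = l2 * B.2 + l3 * C.2 + l4 * E.2.
Proof.
move=> hc; case: (hc) => l1 [l2 [l3 [l4 [[h1 h2 h3 h4 hs] hp]]]] hA hB hC hE hP.
suff l10 : l1 = 0.
  by exists l2, l3, l4; rewrite hp /= l10 !mul0r !add0r.
move: hP; rewrite hp /phi /=.
have hg : ga = (l1 + l2 + l3 + l4) * ga by rewrite hs mul1r.
rewrite hg.
have -> : al * (l1 * A.1 + l2 * B.1 + l3 * C.1 + l4 * E.1) + be * (l1 * A.2 + l2 * B.2 + l3 * C.2 + l4 * E.2) +
  (l1 + l2 + l3 + l4) * ga = l1 * (al * A.1 + be * A.2 + ga) + l2 * (al * B.1 + be * B.2 + ga)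
   + l3 * (al * C.1 + be * C.2 + ga) + l4 * (al * E.1 + be * E.2 + ga) by ring.
move: hA hB hC hE; rewrite /phi.
move: (al * A.1 + be * A.2 + ga) (al * B.1 + be * B.2 + ga) (al * C.1 + be * C.2 + ga)
  (al * E.1 + be * E.2 + ga) => a b c e ha hb hc' he h.
nra.
Qed.

Lemma inf_min (E : set R) m : E m -> (forall x, E x -> m <= x) -> inf E = m.
Proof.
move=> Em hm; apply/eqP; rewrite eq_le; apply/andP; split.
  by apply: ge_inf => //; exists m.
by apply: lb_le_inf; [exists m | exact: hm].
Qed.

Lemma sup_max (E : set R) m : E m -> (forall x, E x -> x <= m) -> sup E = m.
Proof.
move=> Em hm; apply/eqP; rewrite eq_le; apply/andP; split.
  by apply: ge_sup; [exists m | exact: hm].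
by apply: ub_le_sup => //; exists m.
Qed.

Lemma extm (f : R -> R) : has_extreme_minimizers f -> exists ylo yhi,
  0 <= ylo /\ ylo <= yhi /\ inf [set f y | y in `[0, +oo[] = f ylo /\ f yhi = f ylo /\
  (forall y, 0 <= y -> f ylo <= f y) /\
  inf [set y | 0 <= y /\ f y = inf [set f y | y in `[0, +oo[]] = ylo /\
  sup [set y | 0 <= y /\ f y = inf [set f y | y in `[0, +oo[]] = yhi.
Proof.
case=> ylo [yhi [h0 h1 hmin hhi hbd]].
have hI : inf [set f y | y in `[0, +oo[] = f ylo.
  apply: inf_min; first by exists ylo => //; rewrite /= in_itv /= h0.
  move=> z [y hy <-]; apply: hmin; move: hy; by rewrite /= in_itv /= andbT.
have hle : ylo <= yhi by have := hbd yhi h1 hhi => -[].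
exists ylo, yhi; do 5 (split => //); rewrite hI; split.
  apply: inf_min; [by split | by move=> y [hy hfy]; have [] := hbd y hy hfy].
apply: sup_max; [by split | by move=> y [hy hfy]; have [] := hbd y hy hfy].
Qed.
End Conv.

Arguments conv3_base {R} al be ga {A B C p}.
Arguments conv4_base {R} al be ga {A B C E p}.
Arguments conv3_ge {R} al be ga {A B C p}.
Arguments conv4_ge {R} al be ga {A B C E p}.
Section Sep.
Context {R : realType}.

Lemma sepF3 (t x1 x2 b l1 h1 l2 h2 : R) (p : R * R) : 0 < t -> x1 < b -> b < x2 -> l1 <= h1 -> h1 <= l2 -> l2 <= h2 ->
  conv3 (x1, t) (l1, 0) (h1, 0) p -> conv3 (x2, t) (l2, 0) (h2, 0) p -> p.2 = 0.
Proof.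
move=> ht hb1 hb2 hl1 hl2 hl3 C1 C2.
have [k2 [k3 [_ e]]] := conv3_base (- t) (b - h1) (t * h1) C2
    ltac:(rewrite /phi /=; nra) ltac:(rewrite /phi /=; nra) ltac:(rewrite /phi /=; nra)
    (conv3_ge (- t) (b - h1) (t * h1) C1 ltac:(rewrite /phi /=; nra) ltac:(rewrite /phi /=; nra) ltac:(rewrite /phi /=; nra)).
by rewrite e /= !mulr0 addr0.
Qed.

Lemma sepF4 (t x1 x2 b h1 th1 l2 h2 : R) (p : R * R) : 0 < t -> 0 < x1 -> x1 < b -> b < x2 ->
  0 <= h1 -> h1 <= l2 -> l2 <= h2 -> 0 <= th1 -> th1 < t ->
  conv4 (x1, t) (h1, 0) (0, th1) (0, 0) p -> conv3 (x2, t) (l2, 0) (h2, 0) p -> p.2 = 0.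
Proof.
move=> ht hx1 hb1 hb2 h10 hl2 hl3 th10 th1t C1 C2.
have [k2 [k3 [_ e]]] := conv3_base (- t) (b - h1) (t * h1) C2 ltac:(rewrite /phi /=; nra) ltac:(rewrite /phi /=; nra) ltac:(rewrite /phi /=; nra)
    (conv4_ge (- t) (b - h1) (t * h1) C1 ltac:(rewrite /phi /=; nra) ltac:(rewrite /phi /=; nra) ltac:(rewrite /phi /=; nra) ltac:(rewrite /phi /=; nra)).
by rewrite e /= !mulr0 addr0.
Qed.

Lemma sepG3 (t x1 x2 b tl1 th1 l2 h2 : R) (p : R * R) : 0 < t -> 0 < x1 -> x1 < b -> b < x2 ->
  0 <= tl1 -> tl1 <= th1 -> th1 < t -> 0 <= l2 -> l2 <= h2 ->
  conv3 (x1, t) (0, tl1) (0, th1) p -> conv3 (x2, t) (l2, 0) (h2, 0) p -> p.1 = 0.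
Proof.
move=> ht hx1 hb1 hb2 q1 q2 q3 q4 q5 C1 C2.
have [k2 [k3 [e _]]] := conv3_base (t - tl1) (- b) (b * tl1) C1 ltac:(rewrite /phi /=; nra) ltac:(rewrite /phi /=; nra) ltac:(rewrite /phi /=; nra)
    (conv3_ge (t - tl1) (- b) (b * tl1) C2 ltac:(rewrite /phi /=; nra) ltac:(rewrite /phi /=; nra) ltac:(rewrite /phi /=; nra)).
by rewrite e /= !mulr0 addr0.
Qed.

Lemma sepGG (t x1 x2 b tl1 th1 tl2 th2 : R) (p : R * R) : 0 < t -> 0 < x1 -> x1 < b -> b < x2 ->
  0 <= tl1 -> tl1 <= th1 -> th1 < t -> 0 <= tl2 -> tl2 <= th2 -> th2 <= tl1 ->
  conv3 (x1, t) (0, tl1) (0, th1) p -> conv3 (x2, t) (0, tl2) (0, th2) p -> p.1 = 0.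
Proof.
move=> ht hx1 hb1 hb2 q1 q2 q3 q4 q5 q6 C1 C2.
have [k2 [k3 [e _]]] := conv3_base (t - tl1) (- b) (b * tl1) C1 ltac:(rewrite /phi /=; nra) ltac:(rewrite /phi /=; nra) ltac:(rewrite /phi /=; nra)
    (conv3_ge (t - tl1) (- b) (b * tl1) C2 ltac:(rewrite /phi /=; nra) ltac:(rewrite /phi /=; nra) ltac:(rewrite /phi /=; nra)).
by rewrite e /= !mulr0 addr0.
Qed.

Lemma sepG4 (t x1 x2 b tl1 th1 h2 th2 : R) (p : R * R) : 0 < t -> 0 < x1 -> x1 < b -> b < x2 ->
  0 <= tl1 -> tl1 <= th1 -> th1 < t -> 0 <= h2 -> 0 <= th2 -> th2 <= tl1 ->
  conv3 (x1, t) (0, tl1) (0, th1) p -> conv4 (x2, t) (h2, 0) (0, th2) (0, 0) p -> p.1 = 0.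
Proof.
move=> ht hx1 hb1 hb2 q1 q2 q3 q4 q5 q6 C1 C2.
have [k2 [k3 [e _]]] := conv3_base (t - tl1) (- b) (b * tl1) C1 ltac:(rewrite /phi /=; nra) ltac:(rewrite /phi /=; nra) ltac:(rewrite /phi /=; nra)
    (conv4_ge (t - tl1) (- b) (b * tl1) C2 ltac:(rewrite /phi /=; nra) ltac:(rewrite /phi /=; nra) ltac:(rewrite /phi /=; nra) ltac:(rewrite /phi /=; nra)).
by rewrite e /= !mulr0 addr0.
Qed.

Lemma sepEE (t x1 x2 b th1 h2 : R) (p : R * R) : 0 < t -> 0 < x1 -> x1 < b -> b < x2 ->
  0 <= th1 -> 0 <= h2 ->
  conv4 (x1, t) (0, 0) (0, th1) (0, 0) p -> conv4 (x2, t) (h2, 0) (0, 0) (0, 0) p -> p.1 = 0.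
Proof.
move=> ht hx1 hb1 hb2 q1 q2 C1 C2.
have [k2 [k3 [k4 [e _]]]] := conv4_base t (- b) 0 C1 ltac:(rewrite /phi /=; nra) ltac:(rewrite /phi /=; nra) ltac:(rewrite /phi /=; nra) ltac:(rewrite /phi /=; nra)
    (conv4_ge t (- b) 0 C2 ltac:(rewrite /phi /=; nra) ltac:(rewrite /phi /=; nra) ltac:(rewrite /phi /=; nra) ltac:(rewrite /phi /=; nra)).
by rewrite e /= !mulr0 !addr0.
Qed.
End Sep.
Arguments sepF3 {R t x1 x2 b l1 h1 l2 h2 p}.
Arguments sepF4 {R t x1 x2 b h1 th1 l2 h2 p}.
Arguments sepG3 {R t x1 x2 b tl1 th1 l2 h2 p}.
Arguments sepGG {R t x1 x2 b tl1 th1 tl2 th2 p}.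
Arguments sepG4 {R t x1 x2 b tl1 th1 h2 th2 p}.
Arguments sepEE {R t x1 x2 b th1 h2 p}.
Section Ord.
Context {R : realType}.
Lemma ordL1 {F1 G1 F2 G2 : R} : F2 <= F1 -> G1 <= G2 -> F1 < G1 -> G2 < F2 -> False.
Proof. move=> *; lra. Qed.
Lemma ordL2 {F1 G1 F2 G2 : R} : F2 <= F1 -> G1 <= G2 -> F1 < G1 -> F2 = G2 -> False.
Proof. move=> *; lra. Qed.
Lemma ordL3 {F1 G1 F2 G2 : R} : F2 <= F1 -> G1 <= G2 -> F1 = G1 -> G2 < F2 -> False.
Proof. move=> *; lra. Qed.
End Ord.
Lemma mid_ex {R : realType} (x1 x2 : R) : 0 < x1 -> x1 < x2 -> exists b, [/\ 0 < b, x1 < b & b < x2].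
Proof. by move=> h1 h2; exists ((x1 + x2) / 2); split; lra. Qed.

Section Main.
Context {R : realType} (u0 ub rho0 rhob : R -> R).
Hypotheses (mu0 : measurable_fun (`[0%R, +oo[ : set R) u0) (mub : measurable_fun (`[0%R, +oo[ : set R) ub)
  (mrho0 : measurable_fun (`[0%R, +oo[ : set R) rho0) (mrhob : measurable_fun (`[0%R, +oo[ : set R) rhob)
  (bu0 : bounded_on_nonneg u0) (bub : bounded_on_nonneg ub)
  (ub_pos : forall eta, 0 <= eta -> 0 < ub eta)
  (rho0_pos : forall eta, 0 <= eta -> 0 < rho0 eta)
  (rhob_pos : forall eta, 0 <= eta -> 0 < rhob eta)
  (lbrho0 : locally_bounded_on_nonneg rho0) (lbrhob : locally_bounded_on_nonneg rhob)
  (minF : forall x t : R, 0 <= x -> 0 < t ->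
     has_extreme_minimizers (fun y => Fyxt u0 rho0 y x t))
  (minG : forall x t : R, 0 <= x -> 0 < t ->
     has_extreme_minimizers (fun tau => Gtxt ub rhob tau x t)).
Variable t : R.
Hypothesis ht : 0 < t.
Notation mu := (@lebesgue_measure R).
Local Notation F y x := (Fyxt u0 rho0 y x t).
Local Notation G y x := (Gtxt ub rhob y x t).

Definition Mf y := \int[mu]_(eta in `[0, y]) rho0 eta.
Definition Nf y := \int[mu]_(eta in `[0, y]) (rhob eta * ub eta).

Lemma mFi x : measurable_fun (`[0%R, +oo[ : set R) (fun eta => (t * u0 eta + eta - x) * rho0 eta).
Proof.
apply: measurable_funM => //; apply: measurable_funB => //; apply: measurable_funD => //.
exact: measurable_funM.
Qed.
Lemma lFi x : lb (fun eta => (t * u0 eta + eta - x) * rho0 eta).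
Proof.
apply: lbM; last exact: lbL.
apply: lbD; last exact: lbC.
apply: lbD; last exact: lbid.
apply: lbM; [exact: lbC | exact: lbB].
Qed.
Lemma mGi x : measurable_fun (`[0%R, +oo[ : set R) (fun eta => (x - ub eta * (t - eta)) * rhob eta * ub eta).
Proof.
apply: measurable_funM => //; apply: measurable_funM => //; apply: measurable_funB => //.
apply: measurable_funM => //; exact: measurable_funB.
Qed.
Lemma lGi x : lb (fun eta => (x - ub eta * (t - eta)) * rhob eta * ub eta).
Proof.
apply: lbM; last exact: lbB.
apply: lbM; last exact: lbL.
apply: lbD; first exact: lbC.
apply: lbN; apply: lbM; first exact: lbB.
apply: lbD; [exact: lbC | exact/lbN/lbid].
Qed.
Lemma mMi c : measurable_fun (`[0%R, +oo[ : set R) (fun eta => c * rho0 eta).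
Proof. exact: measurable_funM. Qed.
Lemma lMi c : lb (fun eta => c * rho0 eta).
Proof. apply: lbM; [exact: lbC | exact: lbL]. Qed.
Lemma mNi : measurable_fun (`[0%R, +oo[ : set R) (fun eta => rhob eta * ub eta).
Proof. exact: measurable_funM. Qed.
Lemma lNi : lb (fun eta => rhob eta * ub eta).
Proof. apply: lbM; [exact: lbL | exact: lbB]. Qed.
Lemma mNci c : measurable_fun (`[0%R, +oo[ : set R) (fun eta => c * (rhob eta * ub eta)).
Proof. apply: measurable_funM => //; exact: measurable_funM. Qed.
Lemma lNci c : lb (fun eta => c * (rhob eta * ub eta)).
Proof. apply: lbM; [exact: lbC | exact: lNi]. Qed.

Lemma F_shift y x1 x2 : F y x2 = F y x1 - (x2 - x1) * Mf y.
Proof.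
rewrite /Fyxt /Mf.
transitivity (\int[mu]_(eta in `[0, y]) ((t * u0 eta + eta - x1) * rho0 eta - (x2 - x1) * rho0 eta)).
  by apply: eq_Rintegral => e _; ring.
rewrite RintegralB //; [|exact (integ _ _ (mFi x1) (lFi x1))|exact (integ _ _ (mMi _) (lMi _))].
by rewrite RintegralZl //; exact (integ _ _ mrho0 (lbL _ lbrho0)).
Qed.

Lemma G_shift y x1 x2 : G y x2 = G y x1 + (x2 - x1) * Nf y.
Proof.
rewrite /Gtxt /Nf.
transitivity (\int[mu]_(eta in `[0, y]) ((x1 - ub eta * (t - eta)) * rhob eta * ub eta + (x2 - x1) * (rhob eta * ub eta))).
  by apply: eq_Rintegral => e _; ring.
rewrite RintegralD //; [|exact (integ _ _ (mGi x1) (lGi x1))|exact (integ _ _ (mNci _) (lNci _))].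
by rewrite RintegralZl //; exact (integ _ _ mNi lNi).
Qed.

Lemma Mf_lt a b : 0 <= a -> a < b -> Mf a < Mf b.
Proof.
move=> a0 ab; apply: prim_lt => // x h1 _; apply: rho0_pos; exact: le_trans (ltW h1).
Qed.
Lemma Mf_ge0 a : 0 <= Mf a.
Proof. exact: prim_ge0. Qed.
Lemma Nf_lt a b : 0 <= a -> a < b -> Nf a < Nf b.
Proof.
move=> a0 ab; apply: prim_lt => //; [exact: mNi | exact: lNi |].
move=> x h1 _; have x0 : 0 <= x by exact: le_trans (ltW h1).
by rewrite mulr_gt0 // ?rhob_pos ?ub_pos.
Qed.
Lemma Nf_ge0 a : 0 <= Nf a.
Proof. apply: prim_ge0 => x x0; by rewrite mulr_gt0 // ?rhob_pos ?ub_pos. Qed.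

Lemma Fdat x : 0 <= x -> exists ylo yhi, 0 <= ylo /\ ylo <= yhi /\ Fmin u0 rho0 x t = F ylo x /\
  F yhi x = F ylo x /\ (forall y, 0 <= y -> F ylo x <= F y x) /\
  y_low u0 rho0 x t = ylo /\ y_up u0 rho0 x t = yhi.
Proof. move=> hx; have [ylo [yhi H]] := extm _ (minF x t hx ht); exists ylo, yhi; exact: H. Qed.

Lemma Gdat x : 0 <= x -> exists ylo yhi, 0 <= ylo /\ ylo <= yhi /\ Gmin ub rhob x t = G ylo x /\
  G yhi x = G ylo x /\ (forall y, 0 <= y -> G ylo x <= G y x) /\
  tau_low ub rhob x t = ylo /\ tau_up ub rhob x t = yhi.
Proof. move=> hx; have [ylo [yhi H]] := extm _ (minG x t hx ht); exists ylo, yhi; exact: H. Qed.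


Lemma Fmono x1 x2 y1 y2 : 0 <= x1 -> x1 < x2 -> 0 <= y1 -> 0 <= y2 ->
  F y1 x1 = Fmin u0 rho0 x1 t -> F y2 x2 = Fmin u0 rho0 x2 t -> y1 <= y2.
Proof.
move=> hx1 hx12 hy1 hy2 e1 e2.
have hx2 : 0 <= x2 by exact: le_trans (ltW hx12).
have [l1 [h1 [l10 [_ [m1 [_ [mn1 _]]]]]]] := Fdat _ hx1.
have [l2 [h2 [l20 [_ [m2 [_ [mn2 _]]]]]]] := Fdat _ hx2.
have P12 : F y1 x1 <= F y2 x1 by rewrite e1 m1; exact: mn1.
have Q21 : F y2 x2 <= F y1 x2 by rewrite e2 m2; exact: mn2.
rewrite (F_shift y2 x1 x2) (F_shift y1 x1 x2) in Q21.
rewrite leNgt; apply/negP => h.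
have := Mf_lt _ _ hy2 h; nra.
Qed.

Lemma Gmono x1 x2 y1 y2 : 0 <= x1 -> x1 < x2 -> 0 <= y1 -> 0 <= y2 ->
  G y1 x1 = Gmin ub rhob x1 t -> G y2 x2 = Gmin ub rhob x2 t -> y2 <= y1.
Proof.
move=> hx1 hx12 hy1 hy2 e1 e2.
have hx2 : 0 <= x2 by exact: le_trans (ltW hx12).
have [l1 [h1 [l10 [_ [m1 [_ [mn1 _]]]]]]] := Gdat _ hx1.
have [l2 [h2 [l20 [_ [m2 [_ [mn2 _]]]]]]] := Gdat _ hx2.
have P12 : G y1 x1 <= G y2 x1 by rewrite e1 m1; exact: mn1.
have Q21 : G y2 x2 <= G y1 x2 by rewrite e2 m2; exact: mn2.
rewrite (G_shift y2 x1 x2) (G_shift y1 x1 x2) in Q21.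
rewrite leNgt; apply/negP => h.
have := Nf_lt _ _ hy1 h; nra.
Qed.

Lemma Fmin_mono x1 x2 : 0 <= x1 -> x1 < x2 -> Fmin u0 rho0 x2 t <= Fmin u0 rho0 x1 t.
Proof.
move=> hx1 hx12.
have hx2 : 0 <= x2 by exact: le_trans (ltW hx12).
have [l1 [h1 [l10 [_ [m1 [_ [mn1 _]]]]]]] := Fdat _ hx1.
have [l2 [h2 [l20 [_ [m2 [_ [mn2 _]]]]]]] := Fdat _ hx2.
rewrite m1 m2; have := mn2 _ l10; rewrite (F_shift l1 x1 x2).
have := Mf_ge0 l1; nra.
Qed.

Lemma Gmin_mono x1 x2 : 0 <= x1 -> x1 < x2 -> Gmin ub rhob x1 t <= Gmin ub rhob x2 t.
Proof.
move=> hx1 hx12.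
have hx2 : 0 <= x2 by exact: le_trans (ltW hx12).
have [l1 [h1 [l10 [_ [m1 [_ [mn1 _]]]]]]] := Gdat _ hx1.
have [l2 [h2 [l20 [_ [m2 [_ [mn2 _]]]]]]] := Gdat _ hx2.
rewrite m1 m2; have := mn1 _ l20; rewrite (G_shift l2 x1 x2).
have := Nf_ge0 l2; nra.
Qed.

Lemma tau_lt x y : 0 < x -> 0 <= y -> G y x = Gmin ub rhob x t -> y < t.
Proof.
move=> hx hy e.
have [C hC] := bub.
have C0 : 0 < C.
  exact: (lt_le_trans (ub_pos _ (lexx 0)) (le_trans (ler_norm _) (hC _ (lexx 0)))).
pose d := x / (2 * C).
have d0 : 0 < d by rewrite /d divr_gt0 // mulr_gt0.
have Cd : C * d = x / 2 by rewrite /d; field; rewrite gt_eqF.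
rewrite ltNge; apply/negP => hty.
have [l [h [l0 [_ [m [_ [mn _]]]]]]] := Gdat _ (ltW hx).
suff [a [a0 [aT ad]]] : exists a, 0 <= a /\ a < t /\ t - d <= a.
  have : G a x < G y x.
    rewrite /Gtxt; apply: prim_lt => //; [exact: mGi | exact: lGi | | exact: lt_le_trans aT hty].
    move=> eta h1 h2; have e0 : 0 <= eta by exact: le_trans (ltW h1).
    apply: mulr_gt0; [apply: mulr_gt0|]; rewrite ?rhob_pos ?ub_pos //.
    have hu := ub_pos _ e0; have hu2 : ub eta <= C by exact: le_trans (ler_norm _) (hC _ e0).
    rewrite subr_gt0.
    have [hn|hp] := lerP (t - eta) 0.
      by apply: le_lt_trans hx; apply: mulr_ge0_le0 => //; exact: ltW.
    nra.
  rewrite e m; have := mn _ a0; lra.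
have [h0|h0] := lerP 0 (t - d).
  by exists (t - d); split => //; split => //; lra.
by exists 0; split => //; split => //; lra.
Qed.

Lemma yup0 x1 x2 : 0 <= x1 -> x1 < x2 -> Fmin u0 rho0 x1 t = Gmin ub rhob x1 t ->
  Fmin u0 rho0 x2 t = Gmin ub rhob x2 t -> y_up u0 rho0 x1 t = 0.
Proof.
move=> hx1 hx12 e1 e2.
have hx2 : 0 <= x2 by exact: le_trans (ltW hx12).
have [l1 [h1 [l10 [lh1 [m1 [eh1 [mn1 [_ ->]]]]]]]] := Fdat _ hx1.
have [l2 [h2 [l20 [_ [m2 [_ [mn2 _]]]]]]] := Fdat _ hx2.
have h10 : 0 <= h1 by exact: le_trans lh1.
have hG := Gmin_mono _ _ hx1 hx12.
have hs := F_shift h1 x1 x2; have hm := mn2 _ h10.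
apply/eqP; rewrite eq_le h10 andbT leNgt; apply/negP => hpos.
have := Mf_lt _ _ (lexx 0) hpos; have := Mf_ge0 0; nra.
Qed.

Lemma tup0 x1 x2 : 0 <= x1 -> x1 < x2 -> Fmin u0 rho0 x1 t = Gmin ub rhob x1 t ->
  Fmin u0 rho0 x2 t = Gmin ub rhob x2 t -> tau_up ub rhob x2 t = 0.
Proof.
move=> hx1 hx12 e1 e2.
have hx2 : 0 <= x2 by exact: le_trans (ltW hx12).
have [l1 [h1 [l10 [_ [m1 [_ [mn1 _]]]]]]] := Gdat _ hx1.
have [l2 [h2 [l20 [lh2 [m2 [eh2 [mn2 [_ ->]]]]]]]] := Gdat _ hx2.
have h20 : 0 <= h2 by exact: le_trans lh2.
have hF := Fmin_mono _ _ hx1 hx12.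
have hs := G_shift h2 x1 x2; have hm := mn1 _ h20.
apply/eqP; rewrite eq_le h20 andbT leNgt; apply/negP => hpos.
have := Nf_lt _ _ (lexx 0) hpos; have := Nf_ge0 0; nra.
Qed.

Lemma tri_cases x p : 0 < x -> char_triangle u0 ub rho0 rhob x t p ->
  (Fmin u0 rho0 x t < Gmin ub rhob x t /\ conv3 (x, t) (y_low u0 rho0 x t, 0) (y_up u0 rho0 x t, 0) p) \/
  (Gmin ub rhob x t < Fmin u0 rho0 x t /\ conv3 (x, t) (0, tau_low ub rhob x t) (0, tau_up ub rhob x t) p) \/
  (Fmin u0 rho0 x t = Gmin ub rhob x t /\ conv4 (x, t) (y_up u0 rho0 x t, 0) (0, tau_up ub rhob x t) (0, 0) p).
Proof.
move=> hx; rewrite /char_triangle hx /=.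
case: ltgtP => h hp.
- by left.
- by right; left.
- by right; right.
Qed.

Lemma main_lt x1 x2 (p : R * R) : 0 < x1 -> x1 < x2 -> 0 < p.1 -> 0 < p.2 ->
  char_triangle u0 ub rho0 rhob x1 t p -> char_triangle u0 ub rho0 rhob x2 t p -> False.
Proof.
move=> hx1 hx12 hp1 hp2 T1 T2.
have hx2 : 0 < x2 by exact: lt_trans hx12.
have hx1' := ltW hx1; have hx2' := ltW hx2.
have [l1 [h1 [l10 [lh1 [m1 [eh1 [_ [yl1 yh1]]]]]]]] := Fdat _ hx1'.
have [l2 [h2 [l20 [lh2 [m2 [eh2 [_ [yl2 yh2]]]]]]]] := Fdat _ hx2'.
have [tl1 [th1 [tl10 [tlh1 [gm1 [geh1 [_ [tl1e th1e]]]]]]]] := Gdat _ hx1'.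
have [tl2 [th2 [tl20 [tlh2 [gm2 [geh2 [_ [tl2e th2e]]]]]]]] := Gdat _ hx2'.
have hF := Fmin_mono _ _ hx1' hx12; have hG := Gmin_mono _ _ hx1' hx12.
have h10 : 0 <= h1 by exact: le_trans lh1.
have h20 : 0 <= h2 by exact: le_trans lh2.
have th10 : 0 <= th1 by exact: le_trans tlh1.
have th20 : 0 <= th2 by exact: le_trans tlh2.
have yord : h1 <= l2.
  by apply: (Fmono _ _ _ _ hx1' hx12 h10 l20); [rewrite eh1 m1 | rewrite m2].
have tord : th2 <= tl1.
  by apply: (Gmono _ _ _ _ hx1' hx12 tl10 th20); [rewrite gm1 | rewrite geh2 gm2].
have th1t : th1 < t by apply: (tau_lt _ _ hx1 th10); rewrite geh1 gm1.
have th2t : th2 < t by apply: (tau_lt _ _ hx2 th20); rewrite geh2 gm2.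
have [b [b0 hb1 hb2]] := mid_ex _ _ hx1 hx12.
have [[c1 C1]|[[c1 C1]|[c1 C1]]] := tri_cases _ _ hx1 T1; rewrite ?yl1 ?yh1 ?tl1e ?th1e in C1;
have [[c2 C2]|[[c2 C2]|[c2 C2]]] := tri_cases _ _ hx2 T2; rewrite ?yl2 ?yh2 ?tl2e ?th2e in C2;
  try (exfalso; first [exact: (ordL1 hF hG c1 c2) | exact: (ordL2 hF hG c1 c2) | exact: (ordL3 hF hG c1 c2)]).
-
  have e := sepF3 ht hb1 hb2 lh1 yord lh2 C1 C2; by move: hp2; rewrite e ltxx.
-
  have e := sepG3 ht hx1 hb1 hb2 tl10 tlh1 th1t l20 lh2 C1 C2; by move: hp1; rewrite e ltxx.
-
  have e := sepGG ht hx1 hb1 hb2 tl10 tlh1 th1t tl20 tlh2 tord C1 C2; by move: hp1; rewrite e ltxx.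
-
  have e := sepG4 ht hx1 hb1 hb2 tl10 tlh1 th1t h20 th20 tord C1 C2; by move: hp1; rewrite e ltxx.
-
  have e := sepF4 ht hx1 hb1 hb2 h10 yord lh2 th10 th1t C1 C2; by move: hp2; rewrite e ltxx.
-
  have e1 : h1 = 0 by rewrite -yh1; exact: (yup0 _ _ hx1' hx12 c1 c2).
  have e2 : th2 = 0 by rewrite -th2e; exact: (tup0 _ _ hx1' hx12 c1 c2).
  rewrite e1 in C1; rewrite e2 in C2.
  have e := sepEE ht hx1 hb1 hb2 th10 h20 C1 C2; by move: hp1; rewrite e ltxx.
Qed.

End Main.

Theorem lemma2p9 (R : realType) (u0 ub rho0 rhob : R -> R)
  (mu0 : measurable_fun (`[0%R, +oo[ : set R) u0) (mub : measurable_fun (`[0%R, +oo[ : set R) ub)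
  (mrho0 : measurable_fun (`[0%R, +oo[ : set R) rho0) (mrhob : measurable_fun (`[0%R, +oo[ : set R) rhob)
  (bu0 : bounded_on_nonneg u0) (bub : bounded_on_nonneg ub)
  (ub_pos : forall eta, 0 <= eta -> 0 < ub eta)
  (rho0_pos : forall eta, 0 <= eta -> 0 < rho0 eta)
  (rhob_pos : forall eta, 0 <= eta -> 0 < rhob eta)
  (lbrho0 : locally_bounded_on_nonneg rho0) (lbrhob : locally_bounded_on_nonneg rhob)
  (minF : forall x t : R, 0 <= x -> 0 < t ->
     has_extreme_minimizers (fun y => Fyxt u0 rho0 y x t))
  (minG : forall x t : R, 0 <= x -> 0 < t ->
     has_extreme_minimizers (fun tau => Gtxt ub rhob tau x t))
  (t x1 x2 : R) (ht : 0 < t) (hx1 : 0 < x1) (hx2 : 0 < x2) (hx12 : x1 != x2) :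
  ~ (exists p : R * R, [/\ 0 < p.1, 0 < p.2,
       char_triangle u0 ub rho0 rhob x1 t p & char_triangle u0 ub rho0 rhob x2 t p]).
Proof.
move=> [p [hp1 hp2 T1 T2]].
have [h12|h21] : x1 < x2 \/ x2 < x1 by move: hx12; rewrite neq_lt => /orP.
- exact: (main_lt u0 ub rho0 rhob mu0 mub mrho0 mrhob bu0 bub ub_pos rho0_pos rhob_pos lbrho0 lbrhob minF minG t ht x1 x2 p hx1 h12 hp1 hp2 T1 T2).
- exact: (main_lt u0 ub rho0 rhob mu0 mub mrho0 mrhob bu0 bub ub_pos rho0_pos rhob_pos lbrho0 lbrhob minF minG t ht x2 x1 p hx2 h21 hp1 hp2 T2 T1).
Qed.
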